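(* Let $(Q,\cdot)$ be a finite Ward quasigroup of order $n$ with $xx=e$ for all $x$. If $(Q,\cdot)$ is $k$-translatable (with respect to some ordering of $Q$ as $1,\ldots,n$), where $1\le k<n$, then $k=1$, and $(Q,\cdot)$ is induced by a cyclic group, i.e. the group $(Q,\circ)$ with $x\circ y=x\cdot(e\cdot y)$ is cyclic.
   Context: A Ward quasigroup is a quasigroup (a magma in which $ax=b$, $ya=b$ have unique solutions) satisfying $(xz)(yz)=xy$ for all $x,y,z$; it has an element $e$ with $xx=e$ for all $x$, and $x\circ y=x(ey)$ defines a group with identity $e$ from which $(Q,\cdot)$ is recovered by $xy=x\circ y^{-1}$. With $Q=\{1,\ldots,n\}$ and $[i]_n$ denoting $i$ modulo $n$ (with $0$ identified with $n$), a magma is $k$-translatable ($1\le k<n$) if $i\cdot j=[i+1]_n\cdot[j+k]_n$ for all $i,j\in Q$. *)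

(* Defs.v *)
(* Q = {1,...,n} is modelled by 'I_n = {0,...,n-1}
   (element i+1 of the paper corresponds to ordinal i); [i]_n becomes i %% n. *)
From mathcomp Require Import all_boot.
Set Implicit Arguments. Unset Strict Implicit. Unset Printing Implicit Defensive.

Definition quasigroup (T : Type) (op : T -> T -> T) : Prop :=
  forall a b : T, (exists! x, op a x = b) /\ (exists! y, op y a = b).

Definition ward_quasigroup (T : Type) (op : T -> T -> T) : Prop :=
  quasigroup op /\ forall x y z, op (op x z) (op y z) = op x y.

Definition add_mod n (k : nat) (i : 'I_n) : 'I_n :=
  Ordinal (ltn_pmod (i + k) (leq_ltn_trans (leq0n i) (ltn_ord i))).

Definition k_translatable n (op : 'I_n -> 'I_n -> 'I_n) (k : nat) : Prop :=
  forall i j : 'I_n, op i j = op (add_mod 1 i) (add_mod k j).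

Definition ward_circ (T : Type) (op : T -> T -> T) (e : T) (x y : T) : T :=
  op x (op e y).

Definition cyclic_group_op (T : Type) (circ : T -> T -> T) (e : T) : Prop :=
  exists g : T, forall x : T, exists m : nat, x = iter m (fun y => circ y g) e.

(* Main.v *)
Require Import Defs.
From mathcomp Require Import all_boot.

Lemma lcanc (T : Type) (op : T -> T -> T) a x y :
  quasigroup op -> op a x = op a y -> x = y.
Proof.
move=> /(_ a (op a x)) [[x0 [_ Hu]] _] E.
by rewrite -(Hu x erefl) -(Hu y (esym E)).
Qed.

Lemma iter_add n (e : 'I_n) m :
  val (iter m (add_mod 1) e) = (e + m) %% n.
Proof.
elim: m => [|m IH] /=; first by rewrite addn0 modn_small.
by rewrite IH modnDml -addnA addn1.
Qed.

Theorem theorem4p16 (n : nat) (op : 'I_n -> 'I_n -> 'I_n) (e : 'I_n) (k : nat) :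
  ward_quasigroup op ->
  (forall x : 'I_n, op x x = e) ->
  1 <= k < n ->
  k_translatable op k ->
  k = 1 /\ cyclic_group_op (ward_circ op e) e.
Proof.
move=> [Hq HW] Hxx /andP [k1 kn] Ht.
have npos : 0 < n by apply: leq_ltn_trans (ltn_ord e).
have k_1 : k = 1.
  have E : add_mod k e = add_mod 1 e.
    apply: (@lcanc _ op (add_mod 1 e) _ _ Hq).
    by rewrite -Ht !Hxx.
  have /eqP : val (add_mod k e) = val (add_mod 1 e) by rewrite E.
  rewrite /= eqn_modDl => /eqP.
  rewrite !modn_small //; exact: leq_ltn_trans k1 kn.
split => //.
subst k.
have Re : forall w, op w e = w.
  move=> w.
  have [[x0 [Hx0 _]] _] := Hq w w.
  by rewrite -(Hxx x0) -{1}Hx0 HW.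
pose b := Ordinal (ltn_pmod (e + n.-1) npos).
have Tb : add_mod 1 b = e.
  apply: val_inj => /=.
  rewrite modnDml -addnA addn1 prednK // -modnDmr modnn addn0 modn_small //.
have Hstep : forall x, ward_circ op e x (add_mod 1 e) = add_mod 1 x.
  move=> x; rewrite /ward_circ.
  have -> : op e (add_mod 1 e) = b by rewrite -{1}Tb -Ht Re.
  by rewrite Ht Tb Re.
exists (add_mod 1 e) => x.
exists (x + n - e).
have -> : iter (x + n - e) (fun y => ward_circ op e y (add_mod 1 e)) e
        = iter (x + n - e) (add_mod 1) e.
  by elim: (x + n - e) => [|m IH] //=; rewrite IH Hstep.
apply: val_inj; rewrite iter_add.
have he : e <= x + n by rewrite ltnW // ltn_addl.
rewrite addnBA // addnC addnK -modnDmr modnn addn0 modn_small //.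
Qed.
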